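(* Let $\mu>0$. For $T_0\in\mathcal T_{\rm fin}$ of height $r$ with $K=|D_r(T_0)|$ define $$\Xi(T_0)=e^{-\mu(r-1)}4^{-|T_0|}2^{K+1}\sum_{R=1}^K\binom KR\frac{\mu^{R-1}}{(R-1)!}.$$ Then $\sum_{T_0\in\mathcal T_{\rm fin}:\,h(T_0)=r}\Xi(T_0)=1$ for every $r\ge1$.
   Context: Rooted planar trees (root of degree 1); $D_r(T)$ = vertices at height $r$; $|T|$ = number of edges; $h(T)$ = height; $\mathcal T_{\rm fin}$ = finite trees. *)

(* Defs.v *)
From HB Require Import structures.
From mathcomp Require Import all_boot all_order all_algebra.
From mathcomp Require Import all_classical all_reals all_analysis.
Set Implicit Arguments. Unset Strict Implicit. Unset Printing Implicit Defensive.
Import Order.TTheory GRing.Theory Num.Theory.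

Inductive ptree := PNode of seq ptree.

Fixpoint ptree_enc (t : ptree) : GenTree.tree unit :=
  match t with PNode ts => GenTree.Node 0 (map ptree_enc ts) end.
Fixpoint ptree_dec (g : GenTree.tree unit) : ptree :=
  match g with
  | GenTree.Leaf _ => PNode [::]
  | GenTree.Node _ gs => PNode (map ptree_dec gs)
  end.

Fixpoint ptree_encK (t : ptree) : ptree_dec (ptree_enc t) = t :=
  match t with
  | PNode ts =>
    f_equal PNode
      ((fix aux (s : seq ptree) : map ptree_dec (map ptree_enc s) = s :=
          match s with
          | [::] => erefl
          | x :: s' => f_equal2 cons (ptree_encK x) (aux s')
          end) ts)
  end.

HB.instance Definition _ := Equality.copy ptree (can_type ptree_encK).
HB.instance Definition _ := Choice.copy ptree (can_type ptree_encK).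
HB.instance Definition _ := Countable.copy ptree (can_type ptree_encK).

Fixpoint nverts (t : ptree) : nat :=
  match t with PNode ts => (sumn (map nverts ts)).+1 end.

(* |T| = number of edges *)
Definition nedges (t : ptree) : nat := (nverts t).-1.

Fixpoint height (t : ptree) : nat :=
  match t with
  | PNode [::] => 0
  | PNode ts => (foldr maxn 0 (map height ts)).+1
  end.

(* |D_r(T)| = number of vertices at height (depth) r *)
Fixpoint nlevel (r : nat) (t : ptree) : nat :=
  match r, t with
  | 0, _ => 1
  | r'.+1, PNode ts => sumn (map (nlevel r') ts)
  end.

(* T_fin: finite rooted planar trees whose root has degree 1 *)
Definition root_deg1 (t : ptree) : bool :=
  match t with PNode ts => size ts == 1 end.

Local Open Scope ring_scope.

Definition Xi (R : realType) (mu : R) (t : ptree) : R :=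
  let r := height t in
  let K := nlevel r t in
  expR (- mu * (r%:R - 1)) * (4%:R ^+ nedges t)^-1 * 2%:R ^+ K.+1 *
  \sum_(1 <= j < K.+1) ('C(K, j))%:R * mu ^+ j.-1 / (j.-1)`!%:R.

(* Main.v *)
Require Import Defs.
From HB Require Import structures.
From mathcomp Require Import all_boot all_order all_algebra.
From mathcomp Require Import all_classical all_reals all_analysis.
From mathcomp Require Import ring lra zify.
Import Order.TTheory GRing.Theory Num.Theory.
Local Open Scope classical_set_scope.
Local Open Scope ring_scope.

Section Esum.
Variable R : realType.
Local Open Scope ereal_scope.

Lemma esumZl (T : choiceType) (I : set T) (a : T -> \bar R) (r : R) :
  (0 <= r)%R -> (forall i, 0 <= a i) ->
  \esum_(i in I) (r%:E * a i) = r%:E * \esum_(i in I) a i.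
Proof.
move=> r0 a0; rewrite /esum -ereal_supZl //; last first.
  apply/set0P; exists (\sum_(i \in set0) a i); exists set0 => //.
  exact: fsets_set0.
congr ereal_sup; apply/seteqP; split => x /=.
- move=> [A [finA AI] <-]; exists (\sum_(i \in A) a i); first by exists A.
  by rewrite !fsbig_finite //= ge0_sume_distrr.
- move=> [y [A [finA AI] <-] <-]; exists A => //.
  by rewrite !fsbig_finite //= ge0_sume_distrr.
Qed.

Lemma esum_swap (T1 T2 : choiceType) (a : T1 -> T2 -> \bar R) :
  (forall i j, 0 <= a i j) ->
  \esum_(i in [set: T1]) \esum_(j in [set: T2]) a i j =
  \esum_(j in [set: T2]) \esum_(i in [set: T1]) a i j.
Proof.
move=> a0; rewrite (@esum_esum _ _ _ setT (fun _ : T1 => [set: T2])) //.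
rewrite (@esum_esum _ _ _ setT (fun _ : T2 => [set: T1])) //.
rewrite (reindex_esum (setT `*`` (fun _ : T1 => [set: T2])) _ (fun x => (x.2, x.1)))//; split=> //=.
all: try by move=> [i1 i2] [j1 j2] /= _ _ [] -> ->.
all: try by move=> [i1 i2] _; exists (i2, i1).
Qed.
End Esum.
Section Trees.
Variable R : realType.
Definition w (t : ptree) : R := (4%:R ^+ nedges t)^-1.
Definition psi (n : nat) (t : ptree) : R :=
  w t * (nlevel n.+1 t == 0)%:R * 2%:R ^+ nlevel n t.

Lemma nvertsE t : nverts t = (nedges t).+1.
Proof. by case: t. Qed.

Lemma psiS n ts : 4%:R ^+ size ts * psi n.+1 (PNode ts) =
  \prod_(t <- ts) psi n t.
Proof.
elim: ts => [|t ts IH].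
  by rewrite /psi /w /nedges /= big_nil expr0 invr1 !mul1r.
rewrite big_cons -IH /psi /w /nedges /=.
rewrite !exprD ?invfM addn_eq0 -mulnb natrM nvertsE succnK exprS ?invfM.
rewrite [4 ^+ (nedges t).+1]exprS invfM.
by field; rewrite !expf_neq0 // pnatr_eq0.
Qed.

Lemma w_ge0 t : 0 <= w t.
Proof. by rewrite /w invr_ge0 exprn_ge0. Qed.

Lemma psi_ge0 n t : 0 <= psi n t.
Proof. by rewrite /psi !mulr_ge0 ?w_ge0 ?exprn_ge0. Qed.

End Trees.
Lemma sumn_gt0 (f : ptree -> nat) s :
  (0 < sumn (map f s))%N = has (fun t => 0 < f t)%N s.
Proof. by elim: s => [|t s IH] //=; rewrite addn_gt0 IH. Qed.

Lemma foldr_max_geq n s : (n <= foldr maxn 0 (map height s))%N =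
  (n == 0)%N || has (fun t => n <= height t)%N s.
Proof.
elim: s => [|t s IH] /=; first by rewrite leqn0 orbF.
by rewrite leq_max IH orbCA.
Qed.

Lemma nlevel_pos n t : (0 < nlevel n t)%N = (n <= height t)%N.
Proof.
elim: n t => [|n IH] [ts] //=.
case: ts => [|t' ts'] //=.
rewrite ltnS leq_max foldr_max_geq addn_gt0 sumn_gt0 IH.
rewrite (eq_has (fun t => IH t)).
by case: n {IH} => //= n.
Qed.

Lemma height_eq n t :
  (height t == n) = (nlevel n.+1 t == 0)%N && (0 < nlevel n t)%N.
Proof.
by rewrite eqn0Ngt !nlevel_pos -leqNgt eqn_leq.
Qed.


Arguments psi {R}. Arguments w {R}.

Section Core.
Variable R : realType.

Definition qq (N k : nat) : R := if k is k'.+1 then N%:R ^+ k' else 1.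
Definition q (N k : nat) : R := 2 * qq N k.

Definition Q n j : \bar R :=
  \esum_(t in [set: ptree]) (psi n t * 'C(nlevel n t, j)%:R)%:E.

Lemma qq_ge0 N k : 0 <= qq N k.
Proof. by case: k => //= k; rewrite exprn_ge0. Qed.
Lemma q_ge0 N k : 0 <= q N k.
Proof. by rewrite /q mulr_ge0 ?qq_ge0. Qed.

Lemma Q0 j : Q 0 j = (q 0 j)%:E.
Proof.
rewrite /Q (esumID [set PNode [::]]); last first.
  by move=> t _; rewrite lee_fin mulr_ge0 ?psi_ge0.
rewrite setTI esum_set1; last by rewrite lee_fin mulr_ge0 ?psi_ge0.
rewrite esum1 ?adde0; last first.
  move=> [ts] [_ /= H]; rewrite /psi /=.
  by case: ts H => [|t ts] //= _; rewrite mulr0 !mul0r.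
rewrite /psi /w /nedges /= invr1 !mul1r /q /qq.
case: j => [|[|j]] /=; first by rewrite expr1 bin0.
- by rewrite expr1 bin1 expr0.
- by rewrite bin_small // expr0n /= !mulr0.
Qed.

Definition g n (ts : seq ptree) j : R :=
  (4%:R ^+ size ts)^-1 * \prod_(t <- ts) psi n t *
  'C(sumn (map (nlevel n) ts), j)%:R.

Lemma g_ge0 n ts j : 0 <= g n ts j.
Proof.
by rewrite /g !mulr_ge0 ?invr_ge0 ?exprn_ge0 ?prodr_ge0// => t _; exact: psi_ge0.
Qed.

Lemma QS n j : Q n.+1 j = \esum_(ts in [set: seq ptree]) (g n ts j)%:E.
Proof.
rewrite /Q (reindex_esum [set: seq ptree] [set: ptree] PNode); last first.
  split => //; first by move=> x y _ _ [].
  by move=> [ts] _; exists ts.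
apply: eq_esum => ts _; congr (_%:E).
rewrite /g -psiS /=; field.
by rewrite expf_neq0 // pnatr_eq0.
Qed.

Fixpoint p n d j : R :=
  if d is d'.+1 then \sum_(i < j.+1) (4%:R^-1 * q n i * p n d' (j - i)%N)
  else (j == 0)%:R.

Lemma p_ge0 n d j : 0 <= p n d j.
Proof.
elim: d j => [|d IH] j /=; first by rewrite ler0n.
apply: sumr_ge0 => i _; apply: mulr_ge0; last exact: IH.
by rewrite mulr_ge0 ?q_ge0 ?invr_ge0 ?ler0n.
Qed.

Lemma g_cons n t ts j : g n (t :: ts) j =
  \sum_(i < j.+1) ((4%:R^-1 * (psi n t * 'C(nlevel n t, i)%:R)) * g n ts (j - i)%N).
Proof.
rewrite /g /= big_cons -binomial.Vandermonde natr_sum mulr_sumr; apply: eq_bigr => i _.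
rewrite natrM exprS invfM; ring.
Qed.

Lemma Pd n (HQ : forall i, Q n i = (q n i)%:E) d j :
  \esum_(ts in [set ts : seq ptree | size ts = d]) (g n ts j)%:E = (p n d j)%:E.
Proof.
elim: d j => [|d IH] j.
  rewrite (_ : [set ts : seq ptree | size ts = 0%N] = [set [::]]); last first.
    by apply/seteqP; split => ts /=; [move/size0nil | move=> ->].
  rewrite esum_set1 ?lee_fin ?g_ge0 //.
  by rewrite /g /= big_nil bin0n expr0 invr1 !mul1r.
rewrite (_ : [set ts : seq ptree | size ts = d.+1] =
   (fun x => x.1 :: x.2) @` ([set: ptree] `*`` (fun _ => [set ts : seq ptree | size ts = d]))); last first.
  apply/seteqP; split => ts /=.
    by case: ts => [|t ts] //= [H]; exists (t, ts).
  by move=> [[t ts'] [_ /= <-]] <-.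
rewrite esum_image; last by move=> [a b] [c d'] _ _ /= [-> ->].
rewrite -(@esum_esum _ _ _ setT (fun _ => [set ts : seq ptree | size ts = d])
   (fun t ts => (g n (t :: ts) j)%:E)); last first.
  by move=> *; rewrite lee_fin g_ge0.
have hge i t ts : 0 <= 4%:R^-1 * (psi n t * 'C(nlevel n t, i)%:R) * g n ts (j - i)%N.
  apply: mulr_ge0; last exact: g_ge0.
  by apply: mulr_ge0; [rewrite invr_ge0 | apply: mulr_ge0; [exact: psi_ge0|]].
transitivity (\esum_(t in [set: ptree]) \sum_(i < j.+1)
   \esum_(ts in [set ts : seq ptree | size ts = d])
   (4%:R^-1 * (psi n t * 'C(nlevel n t, i)%:R) * g n ts (j - i)%N)%:E).
  apply: eq_esum => t _; rewrite -esum_sum; last by move=> *; rewrite lee_fin.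
  by apply: eq_esum => ts _; rewrite g_cons sumEFin.
rewrite esum_sum; last by move=> *; apply: esum_ge0 => *; rewrite lee_fin.
rewrite /= -sumEFin; apply: eq_bigr => i _.
have hc t : 0 <= 4%:R^-1 * (psi n t * 'C(nlevel n t, i)%:R) :> R.
  by apply: mulr_ge0; [rewrite invr_ge0 | apply: mulr_ge0; [exact: psi_ge0|]].
rewrite (eq_esum (b := fun t => ((p n d (j - i)%N)%:E *
   (4%:R^-1 * (psi n t * 'C(nlevel n t, i)%:R))%:E)%E)); last first.
  move=> t _; rewrite muleC -IH -esumZl ?hc //; last by move=> ts; rewrite lee_fin g_ge0.
rewrite esumZl ?p_ge0 //.
under eq_esum => t _ do rewrite EFinM.
rewrite esumZl ?invr_ge0 //.
by rewrite -/(Q n i) HQ -!EFinM mulrC mulrA.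
by move=> t; rewrite lee_fin mulr_ge0 ?psi_ge0.
Qed.

Lemma QS' n (HQ : forall i, Q n i = (q n i)%:E) j :
  Q n.+1 j = (\sum_(d <oo) (p n d j)%:E)%E.
Proof.
rewrite QS (_ : [set: seq ptree] =
   \bigcup_(d in [set: nat]) [set ts : seq ptree | size ts = d]); last first.
  by apply/seteqP; split => ts //= _; exists (size ts).
rewrite esum_bigcupT; last by move=> *; rewrite lee_fin g_ge0.
  rewrite nneseries_esumT; last by move=> d; rewrite lee_fin p_ge0.
  by apply: eq_esum => d _; rewrite Pd.
by move=> a b _ _ [ts [/= -> ->]].
Qed.

Lemma qq_tele n m :
  \sum_(i < m.+1) (n%:R ^+ i * qq n.+1 (m - i)%N) = (n.+1)%:R ^+ m :> R.
Proof.
elim: m => [|m IH]; first by rewrite big_ord1 expr0 mul1r.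
rewrite big_ord_recl expr0 mul1r subn0 /=.
under eq_bigr => i _ do rewrite /bump /= add1n subSS exprS -mulrA.
rewrite -mulr_sumr IH exprS; ring.
Qed.

Lemma FP n j : q n.+1 j =
  (j == 0)%:R + \sum_(i < j.+1) (4%:R^-1 * q n i * q n.+1 (j - i)%N).
Proof.
case: j => [|m].
  by rewrite big_ord1 /q /qq /=; field.
rewrite big_ord_recl /= add0r /q subn0.
under eq_bigr => i _ do rewrite /bump /= add1n subSS.
rewrite (eq_bigr (fun i : 'I_m.+1 => n%:R ^+ i * qq n.+1 (m - i)%N)); last first.
  by move=> i _; rewrite add0n; field.
rewrite qq_tele.
by rewrite /qq; field.
Qed.

Lemma p_bound n D j : \sum_(d < D) p n d j <= q n.+1 j.
Proof.
elim: D j => [|D IH] j; first by rewrite big_ord0 q_ge0.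
rewrite big_ord_recl /=.
under eq_bigr => d _ do under eq_bigr => k _ do rewrite add0n.
rewrite exchange_big /= FP lerD2l; apply: ler_sum => k _.
rewrite -mulr_sumr; apply: ler_wpM2l; last exact: IH.
by rewrite mulr_ge0 ?invr_ge0 ?q_ge0.
Qed.

Definition F n j : \bar R := (\sum_(d <oo) (p n d j)%:E)%E.

Lemma F_bound n j : (F n j <= (q n.+1 j)%:E)%E.
Proof.
rewrite /F; apply: lime_le.
  by apply: is_cvg_nneseries => d _; rewrite lee_fin p_ge0.
apply: nearW => D; rewrite sumEFin lee_fin big_mkord; exact: p_bound.
Qed.

Lemma F_ge0 n j : (0 <= F n j)%E.
Proof. by apply: nneseries_ge0 => d _; rewrite lee_fin p_ge0. Qed.

Lemma F_rec n j : F n j = ((j == 0)%:R%:E +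
  \sum_(i < j.+1) ((4%:R^-1 * q n i)%:E * F n (j - i)%N))%E.
Proof.
rewrite /F nneseries_recl //; last by move=> d _; rewrite lee_fin p_ge0.
congr (_ + _)%E.
rewrite -(@nneseries_addn _ (fun d => (p n d j)%:E) 1); last by move=> d; rewrite lee_fin p_ge0.
under eq_eseriesr => d _ do rewrite addn1 /= -sumEFin.
rewrite nneseries_sum; last first.
  move=> i d _; rewrite lee_fin; apply: mulr_ge0; last exact: p_ge0.
  by apply: mulr_ge0; [rewrite invr_ge0|exact: q_ge0].
apply: eq_bigr => i _.
under eq_eseriesr => d _ do rewrite EFinM.
by rewrite nneseriesZl // => d _; rewrite lee_fin p_ge0.
Qed.

Lemma F_eq n j : F n j = (q n.+1 j)%:E.
Proof.
elim/ltn_ind: j => j IH.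
have [x Hx] : exists x, F n j = x%:E.
  move: (F_ge0 n j) (F_bound n j); case: (F n j) => // x _ _; by exists x.
have Hrec := F_rec n j.
have HFP := FP n j.
rewrite big_ord_recl subn0 Hx in Hrec; rewrite big_ord_recl subn0 in HFP.
have HS : (\sum_(i < j) ((4%:R^-1 * q n (bump 0 i))%:E * F n (j - bump 0 i)%N) =
    (\sum_(i < j) (4%:R^-1 * q n (bump 0 i) * q n.+1 (j - bump 0 i)%N))%:E)%E.
  rewrite -sumEFin; apply: eq_bigr => i _; rewrite IH ?EFinM //.
  by have := ltn_ord i; rewrite /bump /=; lia.
rewrite HS -EFinM -!EFinD in Hrec; case: Hrec => Hrec.
rewrite Hx; congr (_%:E).
have c0 : 4%:R^-1 * q n 0 = 2^-1 :> R by rewrite /q /qq; field.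
rewrite c0 in Hrec HFP.
have E : \sum_(i < j) (4%:R^-1 * q n (lift ord0 i) * q n.+1 (j - lift ord0 i)%N) =
  \sum_(i < j) (4%:R^-1 * q n (bump 0 i) * q n.+1 (j - bump 0 i)%N) :> R by [].
rewrite E in HFP.
move: Hrec HFP; set S := \sum_(i < j) _ => Hrec HFP.
lra.
Qed.

Lemma Q_closed n j : Q n j = (q n j)%:E.
Proof.
elim: n j => [|n IH] j; first exact: Q0.
by rewrite (@QS' n IH) -/(F n j) F_eq.
Qed.

End Core.

Arguments Q {R}.
Section Final.
Variable R : realType.

Lemma exp_series (x : R) : (\sum_(i <oo) (x ^+ i / i`!%:R)%:E)%E = (expR x)%:E.
Proof.
rewrite expRE -EFin_lim; last first.
  rewrite /pseries/=; under eq_fun do rewrite mulrC.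
  exact: is_cvg_series_exp_coeff.
apply/congr_lim/funext => m /=; rewrite /pseries/= /series/= -sumEFin.
by apply: eq_bigr => i _; rewrite mulrC.
Qed.

Definition fK (mu : R) (K : nat) : R :=
  \sum_(1 <= j < K.+1) ('C(K, j))%:R * mu ^+ j.-1 / (j.-1)`!%:R.

Lemma fK_series mu K : 0 <= mu ->
  (fK mu K)%:E = (\sum_(i <oo) ('C(K, i.+1)%:R * mu ^+ i / i`!%:R)%:E)%E.
Proof.
move=> mu0.
rewrite (nneseries_split 0 K); last first.
  by move=> k _; rewrite lee_fin !mulr_ge0 ?invr_ge0 ?exprn_ge0.
rewrite add0n eseries0 ?adde0; last first.
  by move=> i Ki _; rewrite bin_small ?mul0r // ltnS.
rewrite sumEFin /fK big_add1 /=.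
by congr (_%:E); apply: eq_big => // i; rewrite ?andbT.
Qed.

End Final.
Arguments fK {R}.

Ltac pos := rewrite ?lee_fin; repeat first [ done | apply: mulr_ge0 | apply: divr_ge0 | apply: exprn_ge0 |
  rewrite invr_ge0 | apply: psi_ge0 | apply: ler0n | apply: ltW ].

Theorem mainTheorem12 (R : realType) (mu : R) (hmu : 0 < mu) (r : nat) (hr : (1 <= r)%N) :
  \esum_(t in [set t : ptree | root_deg1 t /\ height t = r]) (Xi mu t)%:E = 1%E.
Proof.
case: r hr => // n _.
rewrite (reindex_esum [set s | height s = n] _ (fun s => PNode [:: s])); last first.
  split.
  - by move=> s /= hs; split => //; rewrite maxn0 hs.
  - by move=> s1 s2 _ _ [].
  - move=> [ts] [/eqP hsz hh]; case: ts hsz hh => [|s [|s' ts]] // _ hs.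
    by exists s => //; move: hs => /= [<-]; rewrite maxn0.
set c := expR (- mu * n%:R) / 2.
rewrite esum_mkcond.
rewrite (eq_esum (b := fun s => (c%:E * ((psi n s)%:E * (fK mu (nlevel n s))%:E))%E)); last first.
  move=> s _; rewrite -!EFinM; case: ifPn => [/set_mem /= hs|/negP hs].
    move/eqP: (hs); rewrite height_eq => /andP[/eqP h1 _].
    rewrite /Xi /psi /c /w h1 /= addn0.
    rewrite maxn0 hs -/(fK mu (nlevel n s)).
    rewrite [nedges (PNode _)]/nedges /= addn0 nvertsE /= mulrSr addrK.
    congr (_%:E); rewrite /c !exprS invfM; field.
    by rewrite expf_neq0 // pnatr_eq0.
  have := hs; rewrite in_setE /= => /eqP; rewrite height_eq negb_and => /orP[h|h].
    by rewrite /psi (negbTE h) /= mulr0 !mul0r mulr0.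
  move: h; rewrite lt0n negbK => /eqP ->.
  by rewrite /fK big_geq // !mulr0.
have c0 : 0 <= c by rewrite /c divr_ge0 ?expR_ge0.
have fK0 K : 0 <= fK mu K.
  rewrite /fK; apply: sumr_ge0 => j _; apply: mulr_ge0; last by rewrite invr_ge0.
  by apply: mulr_ge0 => //; rewrite exprn_ge0 // ltW.
rewrite esumZl //; last by move=> s; rewrite -EFinM; pos.
rewrite (eq_esum (b := fun s => \esum_(i in [set: nat])
   ((mu ^+ i / i`!%:R)%:E * (psi n s * 'C(nlevel n s, i.+1)%:R)%:E)%E)); last first.
  move=> s _; rewrite fK_series ?ltW // -nneseriesZl; last first.
    by move=> i _; pos.
  rewrite nneseries_esumT; last first.
    by move=> i; pos.
  by apply: eq_esum => i _; rewrite -!EFinM; congr (_%:E); ring.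
rewrite esum_swap; last first.
  by move=> s i; rewrite -EFinM; pos.
rewrite (eq_esum (b := fun i => (2%:E * ((n%:R * mu) ^+ i / i`!%:R)%:E)%E)); last first.
  move=> i _; rewrite esumZl; last first.
    - by move=> s; pos.
    - by pos.
  rewrite -/(Q n i.+1) Q_closed /q /= -!EFinM; congr (_%:E).
  rewrite exprMn; field.
  by rewrite pnatr_eq0 -lt0n fact_gt0.
rewrite -nneseries_esumT; last first.
  by move=> i; pos.
rewrite nneseriesZl; last first.
  by move=> i _; pos.
rewrite exp_series -!EFinM; congr (_%:E).
rewrite /c mulNr (mulrC n%:R) -[X in _ = X](expRxMexpNx_1 (mu * n%:R)).
by field.
Qed.
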